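(* Let $V$ be a finite set, $\{\eta(t),t\ge0\}$ a consistent configuration process on $\Omega$, and $\mathbf x=(x_1,\dots,x_n)\in V_n$. Then for all $v\in V$ and $t\ge0$, $$\mathbb E_{\phi(\mathbf x)}[\eta_v(t)]=\sum_{j=1}^n\mathbf P_{x_j}\big(X^{\mathrm{rw}}(t)=v\big),$$ where $\mathbf P_u$ is the law of the random walk $X^{\mathrm{rw}}$ associated to $\{\eta(t)\}$ started at $u$.
   Context: $\Lambda\subseteq\mathbb N_0$; $\Omega_n=\{\eta\in\Lambda^V:\sum_x\eta_x=n\}$, $\Omega=\bigcup_n\Omega_n$; $\phi(\mathbf y)=\sum_i\delta_{y_i}$; $V_n=\{\mathbf x\in V^n:\phi(\mathbf x)\in\Omega_n\}$. A configuration process is a particle-number-conserving Markov process on $\Omega$ with generator $\mathcal L$; it is consistent if $[\mathcal L,\mathcal A]=0$, where $\mathcal Af(\eta)=\sum_{x}\eta_xf(\eta-\delta_x)$ (terms with $\eta_x=0$ vanish). The associated random walk $\{X^{\mathrm{rw}}(t)\}$ on $V$ is defined by: when $\eta(0)=\delta_u$, then $\eta(t)=\delta_{X^{\mathrm{rw}}(t)}$ with $X^{\mathrm{rw}}(0)=u$ (i.e. it is the motion of a single particle). *)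

(* Defs.v *)
From HB Require Import structures.
From mathcomp Require Import all_boot all_order all_algebra.
From mathcomp Require Import all_classical all_reals all_analysis.
Set Implicit Arguments. Unset Strict Implicit. Unset Printing Implicit Defensive.
Import Order.TTheory GRing.Theory Num.Theory.
Import numFieldNormedType.Exports.
Local Open Scope ring_scope.

Section ConfigProcess.
Variables (R : realType) (V : finType).

Definition config := {ffun V -> nat}.

Definition tot (eta : config) : nat := (\sum_(x : V) eta x)%N.

Definition inOmega (Lam : pred nat) (eta : config) : bool := [forall x, Lam (eta x)].

Definition delta (u : V) : config := [ffun w => nat_of_bool (w == u)].

(* eta - delta_x (truncated; only used with eta_x >= 1, other terms vanish) *)
Definition sub_delta (eta : config) (x : V) : config :=
  [ffun w => (eta w - nat_of_bool (w == x))%N].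

Definition phi (y : seq V) : config := [ffun w => (\sum_(z <- y) delta z w)%N].

(* configurations of total mass n, indexed through {ffun V -> 'I_n.+1} *)
Definition of_ord (n : nat) (g : {ffun V -> 'I_n.+1}) : config :=
  [ffun w => nat_of_ord (g w)].

Definition gen (Lam : pred nat) (q : config -> config -> R) (f : config -> R)
  (eta : config) : R :=
  \sum_(g : {ffun V -> 'I_(tot eta).+1} |
        (tot (of_ord g) == tot eta) && inOmega Lam (of_ord g))
     q eta (of_ord g) * (f (of_ord g) - f eta).

Definition annih (f : config -> R) (eta : config) : R :=
  \sum_(x : V) (eta x)%:R * f (sub_delta eta x).

(* Transition semigroup P_t = exp(t L):
   (P_t f)(eta) = E_eta[f(eta(t))] = sum_k t^k/k! (L^k f)(eta). *)
Definition semigroup (Lam : pred nat) (q : config -> config -> R) (t : R)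
  (f : config -> R) (eta : config) : R :=
  limn [series t ^+ k / (k`!)%:R * iter k (gen Lam q) f eta]_k.

Definition config_process (Lam : pred nat) (q : config -> config -> R) : Prop :=
  forall eta zeta, inOmega Lam eta -> inOmega Lam zeta -> eta != zeta ->
    0 <= q eta zeta.

Definition consistent (Lam : pred nat) (q : config -> config -> R) : Prop :=
  forall (f : config -> R) (eta : config), inOmega Lam eta ->
    gen Lam q (annih f) eta = annih (gen Lam q f) eta.

End ConfigProcess.

(* Main.v *)
Require Import Defs.
From HB Require Import structures.
From mathcomp Require Import all_boot all_order all_algebra.
From mathcomp Require Import all_classical all_reals all_analysis.
From mathcomp Require Import ring lra.
Set Implicit Arguments. Unset Strict Implicit. Unset Printing Implicit Defensive.
Import Order.TTheory GRing.Theory Num.Theory.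
Import numFieldNormedType.Exports.
Local Open Scope ring_scope.
Section Aux.
Variables (R : realType) (V : finType) (Lam : pred nat) (q : config V -> config V -> R).
Hypothesis Ldown : forall a b : nat, (b <= a)%N -> Lam a -> Lam b.

Definition OmN (N : nat) (eta : config V) := inOmega Lam eta && (tot eta == N).

Lemma gen_N N (F : config V -> R) eta : tot eta = N ->
  gen Lam q F eta = \sum_(g : {ffun V -> 'I_N.+1} |
        (tot (of_ord g) == N) && inOmega Lam (of_ord g))
     q eta (of_ord g) * (F (of_ord g) - F eta).
Proof. by move=> <-. Qed.

Lemma gen_local N (F G : config V -> R) :
  (forall e, OmN N e -> F e = G e) -> forall eta, OmN N eta -> gen Lam q F eta = gen Lam q G eta.
Proof.
move=> FG eta /andP[Oe /eqP te]; rewrite (gen_N F te) (gen_N G te).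
apply: eq_bigr => g /andP[tg Og]; rewrite !FG //; apply/andP; split => //; exact/eqP.
Qed.

Lemma iter_local N (F G : config V -> R) k :
  (forall e, OmN N e -> F e = G e) -> forall eta, OmN N eta ->
  iter k (gen Lam q) F eta = iter k (gen Lam q) G eta.
Proof.
move=> FG; elim: k => [|k IH] eta Ne /=; first exact: FG.
apply: (@gen_local N) => // e He; exact: IH.
Qed.

Lemma sub_delta_Om (eta : config V) x : inOmega Lam eta -> inOmega Lam (sub_delta eta x).
Proof.
move=> /forallP Oe; apply/forallP => w; rewrite ffunE.
by apply: (Ldown _ (Oe w)); rewrite leq_subr.
Qed.

Lemma annih_local (F G : config V -> R) :
  (forall e, inOmega Lam e -> F e = G e) -> forall eta, inOmega Lam eta ->
  annih F eta = annih G eta.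
Proof.
move=> FG eta Oe; apply: eq_bigr => x _; rewrite FG //; exact: sub_delta_Om.
Qed.

Hypothesis cons : consistent Lam q.

Lemma comm1 k (G : config V -> R) eta : inOmega Lam eta ->
  iter k (gen Lam q) (annih G) eta = annih (iter k (gen Lam q) G) eta.
Proof.
elim: k eta => [|k IH] eta Oe //=.
rewrite -cons //; apply: (@gen_local (tot eta)); last by rewrite /OmN Oe eqxx.
by move=> e /andP[Oe' _]; rewrite IH.
Qed.

Lemma commm m k (G : config V -> R) eta : inOmega Lam eta ->
  iter k (gen Lam q) (iter m (@annih R V) G) eta = iter m (@annih R V) (iter k (gen Lam q) G) eta.
Proof.
elim: m eta => [|m IH] eta Oe //=.
rewrite comm1 //; apply: annih_local => // e Oe'; exact: IH.
Qed.

Lemma genZ (c : R) (G : config V -> R) :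
  gen Lam q (fun e => c * G e) = (fun e => c * gen Lam q G e).
Proof.
apply/funext => eta; rewrite /gen mulr_sumr; apply: eq_bigr => g _.
by rewrite -mulrBr mulrCA.
Qed.

Lemma iterZ k (c : R) (G : config V -> R) :
  iter k (gen Lam q) (fun e => c * G e) = (fun e => c * iter k (gen Lam q) G e).
Proof. by elim: k => [|k IH] //=; rewrite IH genZ. Qed.

End Aux.
Section Comb.
Variables (R : realType) (V : finType).

Lemma tot1 (eta : config V) : tot eta = 1%N -> exists u, eta = delta u.
Proof.
move=> t1; case: (pickP (fun u => 0 < eta u)%N) => [u /= pu|H]; last first.
  move: t1; rewrite /tot big1 // => u _; apply/eqP; have := H u; rewrite /= => /negbT; by rewrite -eqn0Ngt.
exists u; move: t1; rewrite /tot (bigD1 u) //= => t1.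
have eu : eta u = 1%N by move: pu t1; case: (eta u) => [|[|k]] //=.
move: t1; rewrite eu => /eqP; rewrite -[1%N]addn0 eqn_add2l sum_nat_eq0 => /forallP H.
apply/ffunP => w; rewrite ffunE; case: eqP => [->//|/eqP wu].
by have := H w; rewrite wu => /eqP.
Qed.

Lemma sub_deltaR (eta : config V) x u : (0 < eta x)%N ->
  ((sub_delta eta x u)%:R : R) = (eta u)%:R - (u == x)%:R.
Proof.
move=> px; rewrite ffunE; case: eqP => [->|_]; last by rewrite subn0 subr0.
by rewrite natrB.
Qed.

Lemma tot_sub (eta : config V) x : (0 < eta x)%N -> tot (sub_delta eta x) = (tot eta).-1.
Proof.
move=> px; rewrite /tot (bigD1 x) //= [in RHS](bigD1 x) //= ffunE eqxx.
rewrite (eq_bigr (fun w => eta w)); last by move=> w /negbTE wx; rewrite ffunE wx subn0.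
by move: px; case: (eta x) => [|k] // _ /=; rewrite subSS subn0.
Qed.

Lemma comb m (F : config V -> R) (eta : config V) : tot eta = m.+1 ->
  iter m (@annih R V) F eta = (m`!)%:R * \sum_u (eta u)%:R * F (delta u).
Proof.
elim: m eta => [|m IH] eta te.
  have [u ->] := tot1 te; rewrite mul1r (bigD1 u) //= big1 ?addr0.
    by rewrite ffunE eqxx mul1r.
  by move=> w /negbTE wu; rewrite ffunE wu mul0r.
rewrite iterS /annih.
transitivity (\sum_x (eta x)%:R * ((m`!)%:R * \sum_u ((eta u)%:R - (u == x)%:R) * F (delta u)) : R).
  apply: eq_bigr => x _; have [px|] := posnP (eta x); first by rewrite px !mul0r.
  move=> px; rewrite IH; last by rewrite tot_sub // te.
  by congr (_ * (_ * _)); apply: eq_bigr => u _; rewrite sub_deltaR.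
have se : \sum_x ((eta x)%:R : R) = (m.+2)%:R by rewrite -natr_sum -te.
under eq_bigr do rewrite mulrCA.
rewrite -mulr_sumr factS natrM [_ * (m`!)%:R]mulrC -mulrA; congr (_ * _).
rewrite (eq_bigr (fun x => (eta x)%:R * \sum_u ((eta u)%:R * F (delta u)) - (eta x)%:R * \sum_u ((u == x)%:R * F (delta u)))); last first.
  by move=> x _; rewrite -mulrBr -sumrB; congr (_ * _); apply: eq_bigr => u _; rewrite mulrBl.
rewrite sumrB -mulr_suml se.
rewrite [X in _ - X](eq_bigr (fun x => (eta x)%:R * F (delta x))); last first.
  move=> x _; rewrite (bigD1 x) //= eqxx mul1r big1 ?addr0 // => u /negbTE ->.
  by rewrite mul0r.
by rewrite -{2}(mul1r (\sum_ _ _)) -mulrBl -natr1 addrK.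
Qed.
End Comb.
Section Conv.
Variables (R : realType) (V : finType) (Lam : pred nat) (q : config V -> config V -> R).

Lemma gen_N' N (F : config V -> R) eta : tot eta = N ->
  gen Lam q F eta = \sum_(g : {ffun V -> 'I_N.+1} |
        (tot (of_ord g) == N) && inOmega Lam (of_ord g))
     q eta (of_ord g) * (F (of_ord g) - F eta).
Proof. by move=> <-. Qed.

Lemma le_single (I : finType) (P : pred I) (G : I -> R) i : P i ->
  (forall j, P j -> 0 <= G j) -> G i <= \sum_(j | P j) G j.
Proof.
move=> Pi G0; rewrite (bigD1 i) //= lerDl sumr_ge0 // => j /andP[Pj _]; exact: G0.
Qed.

Definition SS N (g : {ffun V -> 'I_N.+1}) :=
  (tot (of_ord g) == N) && inOmega Lam (of_ord g).

Definition QQ N := \sum_(e | SS e) \sum_(g | SS e && SS g)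
   `|q (@of_ord V N e) (@of_ord V N g)|.

Lemma iter_bound N (F : config V -> R) k (e : {ffun V -> 'I_N.+1}) : SS e ->
  `|iter k (gen Lam q) F (of_ord e)| <=
     (QQ N + QQ N) ^+ k * \sum_(e' : {ffun V -> 'I_N.+1} | SS e') `|F (of_ord e')|.
Proof.
have Q0 : 0 <= QQ N by rewrite sumr_ge0 // => *; rewrite sumr_ge0.
have B0 : 0 <= \sum_(e' : {ffun V -> 'I_N.+1} | SS e') `|F (of_ord e')| by rewrite sumr_ge0.
elim: k e => [|k IH] e Se.
  rewrite expr0 mul1r; exact: (le_single (G := fun e' => `|F (of_ord e')|)).
set M := (QQ N + QQ N) ^+ k * _ in IH *.
have M0 : 0 <= M by rewrite mulr_ge0 // exprn_ge0 // addr_ge0.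
move: (Se) => /andP[/eqP te Oe].
rewrite iterS (gen_N' _ te).
apply: le_trans (ler_norm_sum _ _ _) _.
apply: (@le_trans _ _ (\sum_(g | SS g) `|q (of_ord e) (of_ord g)| * (M + M))).
  apply: ler_sum => g Sg; rewrite normrM ler_wpM2l //.
  by apply: le_trans (ler_normB _ _) _; apply: lerD; apply: IH.
rewrite -mulr_suml.
have -> : (QQ N + QQ N) ^+ k.+1 * \sum_(e' : {ffun V -> 'I_N.+1} | SS e') `|F (of_ord e')| = QQ N * (M + M).
  by rewrite /M exprS; ring.
apply: ler_wpM2r; first by rewrite addr_ge0.
rewrite /QQ.
apply: le_trans (le_single (G := fun e0 => \sum_(g | SS e0 && SS g) `|q (of_ord e0) (of_ord g)|) Se _).
  by rewrite le_eqVlt; apply/orP; left; apply/eqP; apply: eq_bigl => g; rewrite Se.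
by move=> *; rewrite sumr_ge0.
Qed.

Lemma of_ord_surj (eta : config V) :
  exists e : {ffun V -> 'I_(tot eta).+1}, of_ord e = eta.
Proof.
exists [ffun w => inord (eta w)]; apply/ffunP => w; rewrite !ffunE inordK //.
by rewrite ltnS /tot (bigD1 w) //= leq_addr.
Qed.

Lemma series_cvg (F : config V -> R) (eta : config V) (t : R) : inOmega Lam eta ->
  cvgn [series t ^+ k / (k`!)%:R * iter k (gen Lam q) F eta]_k.
Proof.
move=> Oe; have [e ee] := of_ord_surj eta.
have Se : SS e by rewrite /SS ee eqxx Oe.
set N := tot eta in e ee Se.
set B := \sum_(e' : {ffun V -> 'I_N.+1} | SS e') `|F (of_ord e')|.
have Q0 : 0 <= QQ N by rewrite sumr_ge0 // => *; rewrite sumr_ge0.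
have B0 : 0 <= B by rewrite sumr_ge0.
apply: normed_cvg.
apply: (@series_le_cvg _ _ (B *: exp_coeff (`|t| * (QQ N + QQ N)))).
- by move=> n /=.
- by move=> n; rewrite /= mulr_ge0 // exp_coeff_ge0 // mulr_ge0 // addr_ge0.
- move=> n /=; rewrite /exp_coeff /= normrM normrM normfV normrX.
  change (`|t| ^+ n / `|(n`!)%:R : R| * `|iter n (gen Lam q) F eta| <= B * ((`|t| * (QQ N + QQ N)) ^+ n / (n`!)%:R)).
  rewrite [`|(n`!)%:R|]ger0_norm //.
  apply: (@le_trans _ _ (`|t| ^+ n / (n`!)%:R * ((QQ N + QQ N) ^+ n * B))).
    apply: ler_wpM2l; first by rewrite divr_ge0 // exprn_ge0.
    by rewrite -ee; apply: iter_bound.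
  by rewrite exprMn le_eqVlt; apply/orP; left; apply/eqP; ring.
- exact/is_cvg_seriesZ/is_cvg_series_exp_coeff.
Qed.

End Conv.

Section Final.
Variables (R : realType) (V : finType).

Lemma limn_sum (I : Type) (r : seq I) (u : I -> nat -> R) :
  (forall i, cvgn (u i)) ->
  cvgn (fun k => \sum_(i <- r) u i k) /\
  limn (fun k => \sum_(i <- r) u i k) = \sum_(i <- r) limn (u i).
Proof.
move=> cu; elim: r => [|a r [IHc IHl]].
  have -> : (fun k => \sum_(i <- [::]) u i k) = fun=> 0.
    by apply/funext => k; rewrite big_nil.
  by rewrite big_nil; split; [exact: is_cvg_cst | exact: lim_cst].
have -> : (fun k => \sum_(i <- a :: r) u i k) = u a + (fun k => \sum_(i <- r) u i k).
  by apply/funext => k; rewrite big_cons.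
rewrite big_cons; split; first exact: is_cvgD.
by rewrite limD // IHl.
Qed.

Lemma sum_phi (s : seq V) (G : V -> R) :
  \sum_u ((phi s u)%:R : R) * G u = \sum_(z <- s) G z.
Proof.
under eq_bigr do rewrite ffunE natr_sum mulr_suml.
rewrite exchange_big /=; apply: eq_bigr => z _.
rewrite (bigD1 z) //= ffunE eqxx mul1r big1 ?addr0 // => u /negbTE uz.
by rewrite ffunE uz mul0r.
Qed.

Lemma tot_phi (s : seq V) : tot (phi s) = size s.
Proof.
rewrite /tot; under eq_bigr do rewrite ffunE.
rewrite exchange_big /= -sum1_size; apply: eq_bigr => z _.
rewrite (bigD1 z) //= ffunE eqxx big1 ?addn0 // => u /negbTE uz.
by rewrite ffunE uz.
Qed.

Lemma delta_eq (u v : V) : (delta u == delta v) = (u == v).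
Proof.
apply/eqP/eqP => [/ffunP/(_ u)|->//]; rewrite !ffunE eqxx.
by case: eqP.
Qed.

Lemma tot0 (eta : config V) u : tot eta = 0%N -> eta u = 0%N.
Proof.
move/eqP; rewrite /tot sum_nat_eq0 => /forallP/(_ u) /=; exact/eqP.
Qed.

End Final.

Unset Implicit Arguments.

Theorem corollary3p10 (R : realType) (V : finType) (Lam : pred nat)
  (q : config V -> config V -> R) (n : nat) (x : n.-tuple V) :
  (forall a b : nat, (b <= a)%N -> Lam a -> Lam b) ->
  config_process Lam q ->
  consistent Lam q ->
  inOmega Lam (phi x) ->
  forall (v : V) (t : R), 0 <= t ->
    semigroup Lam q t (fun eta => (eta v)%:R) (phi x)
    = \sum_(j < n)
        semigroup Lam q t (fun eta => (eta == delta v)%:R) (delta (tnth x j)).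
Proof.
move=> Ldown cp cons Ox v t t0.
set f := fun eta : config V => ((eta v)%:R : R).
set h := fun eta : config V => ((eta == delta v)%:R : R).
have Om_d : forall j, inOmega Lam (delta (tnth x j)).
  move=> j; apply/forallP => w; move/forallP: Ox => /(_ w); apply: Ldown.
  by rewrite [phi x w]ffunE (big_rem (tnth x j)) ?mem_tnth //= leq_addr.
have key : forall k, iter k (gen Lam q) f (phi x) =
    \sum_(j < n) iter k (gen Lam q) h (delta (tnth x j)).
  move=> k.
  have -> : \sum_(j < n) iter k (gen Lam q) h (delta (tnth x j)) =
            \sum_(z <- x) iter k (gen Lam q) h (delta z) by rewrite big_tuple.
  rewrite -sum_phi.
  have tp : tot (phi x) = n by rewrite tot_phi size_tuple.
  case: n x Ox Om_d tp => [|m] x Ox _ tp.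
    have px0 : forall u, phi x u = 0%N by move=> u; apply: tot0.
    rewrite big1; last by move=> u _; rewrite px0 mul0r.
    transitivity (iter k (gen Lam q) (@annih R V (fun _ => 0)) (phi x)).
      apply: (@iter_local R V Lam q 0%N) => [e /andP[_ /eqP te]|]; last by rewrite /OmN Ox tp.
      by rewrite /f tot0 // /annih big1 // => *; rewrite mulr0.
    by rewrite comm1 // /annih big1 // => u _; rewrite px0 mul0r.
  have f0 : (m`!)%:R != 0 :> R by rewrite pnatr_eq0 -lt0n fact_gt0.
  apply: (mulfI f0).
  rewrite -(comb (iter k (gen Lam q) h) tp) -commm //.
  transitivity (iter k (gen Lam q) (fun e => (m`!)%:R * f e) (phi x)); first by rewrite iterZ.
  apply: (@iter_local R V Lam q m.+1); last first. rewrite /OmN tp eqxx andbT. exact: Ox.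
  move=> e /andP[_ /eqP te].
  rewrite (comb h te); congr (_ * _).
  rewrite (bigD1 v) //= /h eqxx mulr1 big1 ?addr0 // => u /negbTE uv.
  by rewrite delta_eq uv mulr0.
rewrite /semigroup.
have -> : [series t ^+ k / (k`!)%:R * iter k (gen Lam q) f (phi x)]_k =
  (fun N => \sum_(j < n) [series t ^+ k / (k`!)%:R * iter k (gen Lam q) h (delta (tnth x j))]_k N).
  apply/funext => N; rewrite /series /=.
  under eq_bigr do rewrite key mulr_sumr.
  by rewrite exchange_big.
have [_ ->] := @limn_sum R 'I_n (index_enum 'I_n)
  (fun j => [series t ^+ k / (k`!)%:R * iter k (gen Lam q) h (delta (tnth x j))]_k)
  (fun j => @series_cvg R V Lam q h _ t (Om_d j)).
by [].
Qed.
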